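(* Let $L$ be a finite-dimensional Lie algebra over any field $F$ which has the one-and-a-half generation property. Then every proper non-zero semi-modular subalgebra of $L$ is a modular maximal subalgebra of $L$.
   Context: $L$ has the one-and-a-half generation property if for every $0\ne x\in L$ there is $y\in L$ with $\langle x,y\rangle=L$, where $\langle\,\cdot\,\rangle$ denotes the generated subalgebra. A subalgebra $B$ covers a subalgebra $A$ if $A$ is a maximal subalgebra of $B$. A subalgebra $U$ is modular in $L$ if $\langle U,B\rangle\cap C=\langle B,U\cap C\rangle$ for all subalgebras $B\subseteq C$ of $L$, and $\langle U,B\rangle\cap C=\langle B\cap C,U\rangle$ for all subalgebras $B,C$ of $L$ with $U\subseteq C$. $U$ is upper modular (um) in $L$ if whenever $B$ is a subalgebra of $L$ which covers $U\cap B$, then $\langle U,B\rangle$ covers $U$; $U$ is lower modular (lm) in $L$ if whenever $B$ is a subalgebra of $L$ such that $\langle U,B\rangle$ covers $U$, then $B$ covers $U\cap B$; $U$ is semi-modular (sm) in $L$ if it is both um and lm. *)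

(* Defs.v *)
(* finite-dimensional Lie algebras over a field F are modelled
   as a finite-dimensional F-vector space L : vectType F together with a
   bracket br : L -> L -> L satisfying the Lie algebra axioms. *)
From HB Require Import structures.
From mathcomp Require Import all_boot all_order all_algebra.
Set Implicit Arguments. Unset Strict Implicit. Unset Printing Implicit Defensive.
Import GRing.Theory.
Local Open Scope ring_scope.

Section Lie.
Variables (F : fieldType) (L : vectType F) (br : L -> L -> L).

Definition lie_bracket : Prop :=
  [/\ forall (a : F) (x y z : L), br (a *: x + y) z = a *: br x z + br y z,
      forall (a : F) (x y z : L), br x (a *: y + z) = a *: br x y + br x z,
      forall x : L, br x x = 0 &
      forall x y z : L, br x (br y z) + br y (br z x) + br z (br x y) = 0].

Definition subalg (U : {vspace L}) : Prop :=
  forall x y, x \in U -> y \in U -> br x y \in U.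

Definition brsp (U V : {vspace L}) : {vspace L} :=
  <<[seq br u v | u <- vbasis U, v <- vbasis V]>>%VS.

(* the subalgebra generated by a subspace U: iterate V |-> V + [V,V];
   this stabilises after at most \dim L steps *)
Definition gen (U : {vspace L}) : {vspace L} :=
  iter (\dim (fullv : {vspace L})) (fun V => (V + brsp V V)%VS) U.

Definition gen2 (x y : L) : {vspace L} := gen (<[x]> + <[y]>)%VS.

Definition one_and_half_gen : Prop :=
  forall x : L, x != 0 -> exists y : L, gen2 x y = fullv.

Definition covers (B A : {vspace L}) : Prop :=
  [/\ subalg B, subalg A, (A <= B)%VS, A != B &
      forall C : {vspace L}, subalg C -> (A <= C)%VS -> (C <= B)%VS ->
        C = A \/ C = B].

Definition maximal_subalg (U : {vspace L}) : Prop := covers fullv U.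

Definition modular (U : {vspace L}) : Prop :=
  (forall B C : {vspace L}, subalg B -> subalg C -> (B <= C)%VS ->
     (gen (U + B) :&: C)%VS = gen (B + (U :&: C))%VS) /\
  (forall B C : {vspace L}, subalg B -> subalg C -> (U <= C)%VS ->
     (gen (U + B) :&: C)%VS = gen ((B :&: C) + U)%VS).

Definition upper_modular (U : {vspace L}) : Prop :=
  forall B : {vspace L}, subalg B -> covers B (U :&: B)%VS ->
    covers (gen (U + B)%VS) U.

Definition lower_modular (U : {vspace L}) : Prop :=
  forall B : {vspace L}, subalg B -> covers (gen (U + B)%VS) U ->
    covers B (U :&: B)%VS.

Definition semi_modular (U : {vspace L}) : Prop :=
  upper_modular U /\ lower_modular U.

End Lie.

(* Main.v *)
Require Import Defs.
From HB Require Import structures.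
From mathcomp Require Import all_boot all_order all_algebra.
Set Implicit Arguments. Unset Strict Implicit. Unset Printing Implicit Defensive.
Import GRing.Theory.
Local Open Scope ring_scope.
Section G.
Variables (F : fieldType) (L : vectType F) (br : L -> L -> L).
Hypothesis hL : lie_bracket br.

Lemma br_addl x y z : br (x + y) z = br x z + br y z.
Proof. by case: hL => H _ _ _; have := H 1 x y z; rewrite !scale1r. Qed.
Lemma br_addr x y z : br z (x + y) = br z x + br z y.
Proof. by case: hL => _ H _ _; have := H 1 z x y; rewrite !scale1r. Qed.
Lemma br0l z : br 0 z = 0.
Proof. have h := br_addl 0 0 z; rewrite addr0 in h. by apply: (addrI (br 0 z)); rewrite addr0 -h. Qed.
Lemma br0r z : br z 0 = 0.
Proof. have h := br_addr 0 0 z; rewrite addr0 in h. by apply: (addrI (br z 0)); rewrite addr0 -h. Qed.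
Lemma br_scalel a x z : br (a *: x) z = a *: br x z.
Proof. by case: hL => H _ _ _; have := H a x 0 z; rewrite !addr0 br0l addr0. Qed.
Lemma br_scaler a x z : br z (a *: x) = a *: br z x.
Proof. by case: hL => _ H _ _; have := H a z x 0; rewrite !addr0 br0r addr0. Qed.

Lemma br_suml n (c : 'I_n -> F) (v : 'I_n -> L) z :
  br (\sum_i c i *: v i) z = \sum_i c i *: br (v i) z.
Proof.
apply: (big_rec2 (fun a b => br a z = b)); first exact: br0l.
by move=> i a b _ <-; rewrite br_addl br_scalel.
Qed.
Lemma br_sumr n (c : 'I_n -> F) (v : 'I_n -> L) z :
  br z (\sum_i c i *: v i) = \sum_i c i *: br z (v i).
Proof.
apply: (big_rec2 (fun a b => br z a = b)); first exact: br0r.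
by move=> i a b _ <-; rewrite br_addr br_scaler.
Qed.

Lemma brsp_mem (V : {vspace L}) x y : x \in V -> y \in V -> br x y \in brsp br V V.
Proof.
move=> /coord_vbasis -> /coord_vbasis ->.
rewrite br_suml; apply: rpred_sum => i _; apply: rpredZ.
rewrite br_sumr; apply: rpred_sum => j _; apply: rpredZ.
apply: memv_span; apply: allpairs_f; apply: mem_nth; by rewrite size_tuple.
Qed.

Definition step (V : {vspace L}) := (V + brsp br V V)%VS.

Lemma brsp_sub (V W : {vspace L}) : subalg br W -> (V <= W)%VS -> (brsp br V V <= W)%VS.
Proof.
move=> sW /subvP sVW; apply/span_subvP => z /allpairsP [[u v] [/= hu hv ->]].
by apply: sW; apply: sVW; apply: vbasis_mem.
Qed.

Lemma gen_min (A W : {vspace L}) : subalg br W -> (A <= W)%VS -> (gen br A <= W)%VS.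
Proof.
move=> sW sAW; rewrite /gen; elim: (\dim _) => [|k IH] //=.
by rewrite subv_add IH brsp_sub.
Qed.

Lemma gen_sub (A : {vspace L}) : (A <= gen br A)%VS.
Proof.
rewrite /gen; elim: (\dim _) => [|k IH] //=.
exact: subv_trans IH (addvSl _ _).
Qed.

Lemma dimup (V : {vspace L}) : step V != V -> (\dim V < \dim (step V))%N.
Proof.
move=> ne; have := dimv_leqif_eq (addvSl V (brsp br V V)).
rewrite /step => /ltn_leqif ->; by rewrite eq_sym.
Qed.

Lemma step_stab (A : {vspace L}) k :
  step (iter k step A) = iter k step A \/ (k < \dim (iter k.+1 step A))%N.
Proof.
elim: k => [|k [IH|IH]].
- case: (eqVneq (step A) A) => [->|ne]; [by left|right].
  by have := dimup ne; apply: leq_trans.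
- by left; rewrite iterS IH.
- case: (eqVneq (step (iter k.+1 step A)) (iter k.+1 step A)) => [->|ne]; [by left|right].
  by have := dimup ne; apply: leq_trans.
Qed.

Lemma gen_subalg (A : {vspace L}) : subalg br (gen br A).
Proof.
have fix1 : step (gen br A) = gen br A.
  case: (step_stab A (\dim (fullv : {vspace L}))) => // /leq_trans/(_ (dimvS (subvf _))).
  by rewrite ltnn.
move=> x y hx hy; rewrite -fix1; apply: (subvP (addvSr _ _)).
exact: brsp_mem.
Qed.

Lemma gen_id (A : {vspace L}) : subalg br A -> gen br A = A.
Proof. by move=> sA; apply: subv_anti; rewrite gen_min // gen_sub. Qed.

Lemma gen_mono (A B : {vspace L}) : (A <= B)%VS -> (gen br A <= gen br B)%VS.
Proof. move=> h; apply: gen_min; first exact: gen_subalg. exact: subv_trans h (gen_sub _). Qed.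

Lemma subalg_cap (A B : {vspace L}) : subalg br A -> subalg br B -> subalg br (A :&: B)%VS.
Proof. by move=> sA sB x y; rewrite !memv_cap => /andP[? ?] /andP[? ?]; rewrite sA ?sB. Qed.

Lemma subalg_line y : subalg br <[y]>%VS.
Proof.
move=> a b /vlineP[c ->] /vlineP[d ->].
case: hL => _ _ h0 _. rewrite br_scalel br_scaler h0 !scaler0; exact (mem0v _).
Qed.

Lemma subalg0 : subalg br 0%VS.
Proof. by move=> a b; rewrite !memv0 => /eqP-> _; by rewrite br0l; apply/eqP. Qed.

Lemma covers_line y : y != 0 -> covers br <[y]>%VS 0%VS.
Proof.
move=> y0; split; [exact: subalg_line|exact: subalg0|exact: sub0v| |].
  by rewrite eq_sym -dimv_eq0 dim_vline y0.
move=> C _ _ hC; have := dimvS hC; rewrite dim_vline y0.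
case: (eqVneq (\dim C) 0%N) => [h|ne] _.
  by left; apply/eqP; rewrite -dimv_eq0 h.
right; apply/eqP; rewrite eqEdim hC dim_vline y0 /=; by rewrite lt0n.
Qed.
End G.

Theorem theorem2p8 (F : fieldType) (L : vectType F) (br : L -> L -> L) :
  lie_bracket br -> one_and_half_gen br ->
  forall U : {vspace L},
    subalg br U -> U != 0%VS -> U != fullv -> semi_modular br U ->
    modular br U /\ maximal_subalg br U.
Proof.
move=> hL h15 U sU U0 Uf [um lm].
set x := vpick U.
have xU : x \in U by exact: memv_pick.
have x0 : x != 0 by rewrite vpick0.
have [y hy] := h15 x x0.
have yU : y \notin U.
  apply/negP => yU; move/negP: Uf; apply; apply/eqP; apply: subv_anti.
  rewrite subvf /= -hy; apply: gen_min => //.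
  by rewrite subv_add -!memvE xU yU.
have y0 : y != 0 by apply: contraNneq yU => ->; exact: mem0v.
have cl := covers_line hL y0.
have capUy : (U :&: <[y]>)%VS = 0%VS.
  case: cl => _ _ _ _ /(_ (U :&: <[y]>)%VS) [] //.
  - by apply: subalg_cap => //; apply: subalg_line.
  - exact: sub0v.
  - exact: capvSr.
  move=> h; move/negP: yU; case; rewrite memvE -h; exact: capvSl.
have cov : covers br (gen br (U + <[y]>)%VS) U.
  by apply: um; [exact: subalg_line|rewrite capUy].
have genf : gen br (U + <[y]>)%VS = fullv.
  apply: subv_anti; rewrite subvf /= -hy /gen2; apply: gen_mono.
  by []. by apply: addvS => //; rewrite -memvE.
rewrite genf in cov.
have max : maximal_subalg br U by [].
have gcases : forall B, subalg br B -> ~~ (B <= U)%VS -> gen br (U + B)%VS = fullv.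
  move=> B sB nBU; case: cov => _ _ _ _ /(_ (gen br (U + B)%VS)) [] //.
  - exact: gen_subalg.
  - exact: subv_trans (addvSl _ _) (gen_sub _ _).
  - exact: subvf.
  move=> h; move/negP: nBU; case.
  by rewrite -h; exact: subv_trans (addvSr _ _) (gen_sub _ _).
split=> //; split.
- move=> B C sB sC BC; case BU: (B <= U)%VS.
    rewrite (addv_idPl BU) (gen_id sU).
    have : (B <= U :&: C)%VS by rewrite subv_cap BU BC.
    by move/addv_idPr ->; rewrite gen_id //; exact: subalg_cap.
  rewrite gcases ?BU // capfv.
  have CU : ~~ (C <= U)%VS by apply: contraFN BU => CU; exact: subv_trans BC CU.
  have covC := lm C sC (ltac:(rewrite gcases //)).
  case: covC => _ _ _ _ /(_ (gen br (B + U :&: C)%VS)) [] //.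
  + exact: gen_subalg.
  + exact: subv_trans (addvSr _ _) (gen_sub _ _).
  + by apply: gen_min => //; rewrite subv_add BC capvSr.
  move=> h; move/negP: BU; case.
  apply: subv_trans (capvSl U C); rewrite -h.
  exact: subv_trans (addvSl _ _) (gen_sub _ _).
- move=> B C sB sC UC; case BU: (B <= U)%VS.
    rewrite (addv_idPl BU) (gen_id sU) (capv_idPl UC).
    have : (B :&: C <= U)%VS by exact: subv_trans (capvSl _ _) BU.
    by move/addv_idPl; rewrite addvC => ->; rewrite gen_id.
  rewrite gcases ?BU // capfv.
  case: cov => _ _ _ _ /(_ C sC UC (subvf _)) [] ->.
  + by rewrite (addv_idPr (capvSr _ _)) gen_id.
  + by rewrite capvf addvC gcases ?BU.
Qed.
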